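(* Consider the strong recursive skeletonization procedure described in the context, applied to $K$, with arbitrary choices of the partitions $\mathcal{B}_m=\mathcal{R}_m\cup\mathcal{S}_m$ and interpolation matrices at each step (assuming the pivot blocks are invertible). Let $\ell\ge1$ and let $r$ be the number of the last box at level $\ell$, and let $A=Z(K;\mathcal{B}_1,\dots,\mathcal{B}_r)$. For every box $j>r$, let $\mathcal{B}_j$ be the set of DOFs active in $A$ whose points lie in box $j$, and $\mathcal{F}_j$ the set of DOFs active in $A$ that lie neither in box $j$ nor in any neighbor of box $j$ at the level of box $j$. Then $$A_{\mathcal{F}_j\mathcal{B}_j}=K_{\mathcal{F}_j\mathcal{B}_j}\quad\text{and}\quad A_{\mathcal{B}_j\mathcal{F}_j}=K_{\mathcal{B}_j\mathcal{F}_j}\qquad\text{for all } j>r.$$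
   Context: Let $K\in\mathbb{C}^{N\times N}$ have rows and columns indexed by $[N]=\{1,\dots,N\}$; each index (a ''DOF'') $i$ is associated with a point $x_i\in\mathbb{R}^d$, $d\in\{2,3\}$, in a cube $\Omega$. For index sets $\mathcal{I},\mathcal{J}$, $A_{\mathcal{I}\mathcal{J}}$ is the corresponding submatrix. A uniformly refined quadtree ($d=2$) or octree ($d=3$) decomposition of $\Omega$ is given, with levels numbered from the finest $\ell=1$ (leaves) to the root $\ell=L$; boxes at level $\ell$ have sidelength $D_\ell=2^{\ell-1}D_1$. Two distinct boxes at the same level are neighbors if they are adjacent. Boxes are numbered $1,2,\dots$ along a fixed bottom-up level-by-level traversal (every box of level $\ell$ precedes every box of level $\ell+1$). Procedure: maintain a matrix $A$ (initially $A=K$) and a set of active DOFs (initially all of $[N]$). Boxes are processed in order. When box $m$, at level $\ell$, is processed: $\mathcal{B}_m$ is the set of active DOFs whose points lie in box $m$ (for $\ell>1$ this is the union of the skeleton sets $\mathcal{S}_c$ of the children $c$ of box $m$); $\mathcal{N}_m$ is the set of active DOFs lying in the level-$\ell$ neighbors of box $m$; $\mathcal{F}_m$ is the set of remaining active DOFs (far field). A partition $\mathcal{B}_m=\mathcal{R}_m\cup\mathcal{S}_m$ (redundant/skeleton) and a matrix $T$ of size $|\mathcal{S}_m|\times|\mathcal{R}_m|$ are chosen (via an interpolative decomposition). Writing $R,S,N$ for $\mathcal{R}_m,\mathcal{S}_m,\mathcal{N}_m$, set $X_{RR}=A_{RR}-T^*A_{SR}-A_{RS}T+T^*A_{SS}T$,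 $X_{RS}=A_{RS}-T^*A_{SS}$, $X_{SR}=A_{SR}-A_{SS}T$, $X_{RN}=A_{RN}-T^*A_{SN}$, $X_{NR}=A_{NR}-A_{NS}T$, and, with $X_{RR}$ invertible, $X_{SS}=A_{SS}-X_{SR}X_{RR}^{-1}X_{RS}$, $X_{SN}=A_{SN}-X_{SR}X_{RR}^{-1}X_{RN}$, $X_{NS}=A_{NS}-X_{NR}X_{RR}^{-1}X_{RS}$, $X_{NN}=A_{NN}-X_{NR}X_{RR}^{-1}X_{RN}$. The strongly skeletonized matrix $Z(A;\mathcal{B}_m)$ equals $A$ except that its $(R,R)$ block is $X_{RR}$, all other entries in rows or columns indexed by $R$ are zero, and its $(S,S),(S,N),(N,S),(N,N)$ blocks are $X_{SS},X_{SN},X_{NS},X_{NN}$; all other entries are unchanged. Then $A$ is replaced by $Z(A;\mathcal{B}_m)$ and the DOFs of $\mathcal{R}_m$ become inactive. $Z(K;\mathcal{B}_1,\dots,\mathcal{B}_r)$ denotes the matrix obtained after processing boxes $1,\dots,r$ in order. *)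

(* Defs.v *)
From HB Require Import structures.
From mathcomp Require Import all_boot all_order all_algebra.
Set Implicit Arguments. Unset Strict Implicit. Unset Printing Implicit Defensive.
Import Order.TTheory GRing.Theory Num.Theory.
Local Open Scope ring_scope.

(* Strong recursive skeletonization on a uniform quadtree/octree.
   - C : the scalar field (any numClosedFieldType, e.g. complex numbers),
     with conjugation x^* used for T^*.
   - DOFs are 'I_N; each DOF i lies in the leaf box with integer coordinates
     [leaf i k] (k < d), leaves forming a 2^(L-1) x ... x 2^(L-1) grid.
   - The box at level l (1 = leaves, L = root) containing DOF i has
     coordinates [leaf i k %/ 2^(l-1)]; boxes at level l are indexed by
     {ffun 'I_d -> 'I_(2^(L-l))}. *)

Section Skel.
Variables (C : numClosedFieldType) (N d L : nat).
Variable leaf : 'I_N -> 'I_d -> 'I_(2 ^ (L - 1)).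

Definition box (l : nat) := {ffun 'I_d -> 'I_(2 ^ (L - l))}.

Definition boxcoord (l : nat) (i : 'I_N) (k : 'I_d) : nat :=
  (leaf i k %/ 2 ^ (l - 1))%N.

Definition inbox (l : nat) (c : box l) (i : 'I_N) : bool :=
  [forall k, boxcoord l i k == nat_of_ord (c k)].

Definition in_nbr (l : nat) (c : box l) (i : 'I_N) : bool :=
  ~~ inbox c i &&
  [forall k, (boxcoord l i k <= (c k).+1)%N && (nat_of_ord (c k) <= (boxcoord l i k).+1)%N].

Definition state := ('M[C]_N * {set 'I_N})%type.

Section Z.
Variables (A : 'M[C]_N) (R S Nb : {set 'I_N}) (T : 'I_N -> 'I_N -> C).

(* (A_{.R} - A_{.S} T) : gives X_SR and X_NR *)
Definition Xcol (i r : 'I_N) : C := A i r - \sum_(s in S) A i s * T s r.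
(* (A_{R.} - T^* A_{S.}) : gives X_RS and X_RN *)
Definition Xrow (r j : 'I_N) : C := A r j - \sum_(s in S) (T s r)^* * A s j.
Definition XRR (r r' : 'I_N) : C :=
  A r r' - \sum_(s in S) (T s r)^* * A s r' - \sum_(s in S) A r s * T s r'
  + \sum_(s in S) \sum_(s' in S) (T s r)^* * A s s' * T s' r'.

Definition pivot : 'M[C]_#|R| :=
  \matrix_(a, b) XRR (enum_val a) (enum_val b).

Definition schur (i j : 'I_N) : C :=
  \sum_(a < #|R|) \sum_(b < #|R|)
     Xcol i (enum_val a) * invmx pivot a b * Xrow (enum_val b) j.

Definition Zskel : 'M[C]_N :=
  \matrix_(i, j)
    if (i \in R) && (j \in R) then XRR i j
    else if (i \in R) || (j \in R) then 0
    else if (i \in S :|: Nb) && (j \in S :|: Nb) then A i j - schur i j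
    else A i j.
End Z.

Definition skel_step (l : nat) (c : box l) (st st' : state) : Prop :=
  let B := [set i in st.2 | inbox c i] in
  let Nb := [set i in st.2 | in_nbr c i] in
  exists (R : {set 'I_N}) (T : 'I_N -> 'I_N -> C),
    [/\ R \subset B,
        pivot st.1 R (B :\: R) T \in unitmx &
        st' = (Zskel st.1 R (B :\: R) Nb T, st.2 :\: R)].

Inductive skel_run (l : nat) : seq (box l) -> state -> state -> Prop :=
| skel_run_nil st : skel_run [::] st st
| skel_run_cons c s st st' st'' :
    skel_step c st st' -> skel_run s st' st'' -> skel_run (c :: s) st st''.

Inductive skel_upto (K : 'M[C]_N) (order : forall l, seq (box l)) :
    nat -> state -> Prop :=
| skel_upto0 : skel_upto K order 0 (K, setT)
| skel_uptoS l st st' :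
    skel_upto K order l st -> skel_run (order l.+1) st st' ->
    skel_upto K order l.+1 st'.

End Skel.

(* Main.v *)
Require Import Defs.
From HB Require Import structures.
From mathcomp Require Import all_boot all_order all_algebra.
From mathcomp Require Import zify.
Import Order.TTheory GRing.Theory Num.Theory.
Local Open Scope ring_scope.
Set Implicit Arguments.

Section Aux.
Variables (C : numClosedFieldType) (N d L : nat).
Variable leaf : 'I_N -> 'I_d -> 'I_(2 ^ (L - 1)).

Definition closeb (l : nat) (i j : 'I_N) : Prop :=
  forall k, (boxcoord leaf l i k <= boxcoord leaf l j k + 2)%N /\
            (boxcoord leaf l j k <= boxcoord leaf l i k + 2)%N.

Definition Inv (K : 'M[C]_N) (lev : nat) (st : state C N) : Prop :=
  forall i j, i \in st.2 -> j \in st.2 -> st.1 i j <> K i j ->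
    exists l', [/\ (0 < l')%N, (l' <= lev)%N & closeb l' i j].

Lemma near_of l (c : box d L l) i : inbox leaf c i || in_nbr leaf c i ->
  forall k, (boxcoord leaf l i k <= (c k).+1)%N /\ (nat_of_ord (c k) <= (boxcoord leaf l i k).+1)%N.
Proof.
case/orP.
  move/forallP=> H k; move/eqP: (H k) => ->; lia.
case/andP=> _ /forallP H k; by case/andP: (H k).
Qed.

Lemma Inv_mono K l1 l2 st : (l1 <= l2)%N -> Inv K l1 st -> Inv K l2 st.
Proof.
move=> le H i j Hi Hj Hne; have [l' [h1 h2 h3]] := H i j Hi Hj Hne.
exists l'; split => //; exact: leq_trans h2 le.
Qed.

Lemma step_inv K lev l (c : box d L l) st st' :
  (0 < l <= lev)%N -> skel_step leaf c st st' -> Inv K lev st -> Inv K lev st'.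
Proof.
case/andP=> l0 llev [R [T [_ _ ->]]] H i j /=.
rewrite !inE => /andP [iR ia] /andP [jR ja].
rewrite mxE (negbTE iR) (negbTE jR) /=.
case: ifP => [/andP [hi hj] | _]; last exact: H.
move=> _; exists l; split => //.
have ni : forall k, (boxcoord leaf l i k <= (c k).+1)%N /\ (nat_of_ord (c k) <= (boxcoord leaf l i k).+1)%N.
  apply: near_of; move: hi; rewrite !inE; case/orP=> [/and3P[_ _ ->] // | /andP[_ ->]]; by rewrite orbT.
have nj : forall k, (boxcoord leaf l j k <= (c k).+1)%N /\ (nat_of_ord (c k) <= (boxcoord leaf l j k).+1)%N.
  apply: near_of; move: hj; rewrite !inE; case/orP=> [/and3P[_ _ ->] // | /andP[_ ->]]; by rewrite orbT.
move=> k; have := ni k; have := nj k; lia.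
Qed.

Lemma run_inv K lev l (s : seq (box d L l)) st st' :
  (0 < l <= lev)%N -> skel_run leaf s st st' -> Inv K lev st -> Inv K lev st'.
Proof.
move=> hl; elim=> // c s0 st1 st2 st3 hs _ IH H.
apply: IH; exact: step_inv hl hs H.
Qed.

Lemma upto_inv K order lev st : skel_upto leaf K order lev st -> Inv K lev st.
Proof.
move=> h; induction h as [|l st0 st1 h0 IH hr].
  by move=> i j _ _ /=; rewrite /= => [].
apply: (run_inv _ hr); first by rewrite ltn0Sn leqnn.
exact: Inv_mono (leqnSn l) IH.
Qed.

Lemma div_close x y m : (1 < m)%N -> (x <= y + 2)%N -> (x %/ m <= y %/ m + 1)%N.
Proof.
move=> m1 h.
have : (x %/ m <= (y + m) %/ m)%N by apply: leq_div2r; lia.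
by rewrite divnDr ?dvdnn // divnn; case: m m1.
Qed.

Lemma coarsen l' l i j : (0 < l')%N -> (l' < l)%N -> closeb l' i j ->
  forall k, (boxcoord leaf l i k <= boxcoord leaf l j k + 1)%N /\
            (boxcoord leaf l j k <= boxcoord leaf l i k + 1)%N.
Proof.
move=> l0 ll H k; have [h1 h2] := H k.
have E : forall x, (x %/ 2 ^ (l - 1) = (x %/ 2 ^ (l' - 1)) %/ 2 ^ (l - l'))%N.
  move=> x; rewrite -divnMA -expnD; congr (_ %/ 2 ^ _)%N; lia.
have m1 : (1 < 2 ^ (l - l'))%N.
  have -> : (l - l' = (l - l').-1.+1)%N by lia.
  by rewrite expnS; have := expn_gt0 2 (l - l').-1; lia.
rewrite /boxcoord !E; split; exact: div_close.
Qed.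

End Aux.

Theorem corollary3p2 (C : numClosedFieldType) (N d L : nat)
  (leaf : 'I_N -> 'I_d -> 'I_(2 ^ (L - 1)))
  (K : 'M[C]_N)
  (order : forall l : nat, seq (box d L l))
  (hd : d = 2%N \/ d = 3%N)
  (horder : forall l : nat, (1 <= l <= L)%N -> perm_eq (order l) (enum (box d L l)))
  (lev : nat) (hlev : (1 <= lev <= L)%N)
  (A : 'M[C]_N) (act : {set 'I_N})
  (hrun : skel_upto leaf K order lev (A, act)) :
  forall (l : nat) (c : box d L l), (lev < l <= L)%N ->
  let Bj := [set i in act | inbox leaf c i] in
  let Fj := [set i in act | ~~ inbox leaf c i && ~~ in_nbr leaf c i] in
  forall i j, i \in Fj -> j \in Bj -> A i j = K i j /\ A j i = K j i.
Proof.
move=> l c /andP [hl _] Bj Fj i j.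
rewrite !inE => /andP [ia /andP [ni nn]] /andP [ja /forallP jc].
have I := upto_inv hrun.
have contra : forall l', (0 < l')%N -> (l' <= lev)%N -> closeb _ leaf l' i j -> False.
  move=> l' h0 h1 hc.
  have hk := @coarsen N d L leaf l' l i j h0 (leq_ltn_trans h1 hl) hc.
  move/negP: nn; apply; rewrite /in_nbr ni /=; apply/forallP => k.
  have := hk k; move/eqP: (jc k) => ->; move=> [a b]; apply/andP; split; lia.
split.
  apply/eqP; apply/negPn/negP => /eqP hne.
  have [l' [h0 h1 hc]] := I i j ia ja hne; exact: contra h0 h1 hc.
apply/eqP; apply/negPn/negP => /eqP hne.
have [l' [h0 h1 hc]] := I j i ja ia hne.
apply: (contra l' h0 h1) => k; have [a b] := hc k; split => //.
Qed.
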